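(* Let $K$ be an infinite field, $n\ge 1$, $d \ge 1$, and let $G \subseteq S_{n+1}$ be a subgroup acting transitively on the variables $x_0,\dots,x_n$. Let $X \subseteq \mathbb{P}^n_K$ be a general hypersurface of degree $d$, viewed as a $K$-rational point of $\mathbb{P}(K[x_0,\dots,x_n]_d)$ (i.e., $X = \mathcal{V}(f)$ with $f$ a homogeneous polynomial of degree $d$ whose coefficients lie in a suitable non-empty Zariski-open subset). Then $$\bigcap_{\sigma \in G} \sigma(X) = \emptyset.$$ In particular, for $G=\mathbb{Z}/(n+1)\mathbb{Z}$ acting by cyclic permutation of the variables, the $n+1$ cyclic permutations of a general homogeneous polynomial of degree $d$ form a homogeneous system of parameters of $K[x_0,\dots,x_n]$.
   Context: $S_{n+1}$ acts on $K[x_0,\dots,x_n]$ by permuting the variables, and hence on $\mathbb{P}^n_K$ and on hypersurfaces: $\sigma(\mathcal{V}(f)) = \mathcal{V}(\sigma.f)$. *)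

(* Defs.v *)
From HB Require Import structures.
From mathcomp Require Import all_boot all_order all_algebra all_fingroup.
From mathcomp Require Import mpoly.
Set Implicit Arguments. Unset Strict Implicit. Unset Printing Implicit Defensive.
Import GRing.Theory.
Local Open Scope ring_scope.

Definition infinite_type (T : eqType) := forall s : seq T, exists x, x \notin s.

(* Monomials of degree exactly d in the n.+1 variables x_0..x_n:
   they index the coordinates of K[x_0..x_n]_d. *)
Definition Mon (n d : nat) := {m : 'X_{1..n.+1 < d.+1} | mdeg (bmnm m) == d}.

Definition coeffs (K : fieldType) (n d : nat) (f : {mpoly K[n.+1]})
  : 'I_#|{: Mon n d}| -> K :=
  fun i => f@_(bmnm (val (enum_val i))).

(* sigma.f : substitute x_i |-> x_(sigma i) *)
Definition pact (K : fieldType) (n : nat) (s : 'S_n.+1) (f : {mpoly K[n.+1]}) :=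
  msym s f.

(* The scheme-theoretic intersection of the hypersurfaces V(g_j) (g_j homogeneous)
   in P^n_K is empty: it has no L-point for any field extension L of K. *)
Definition proj_common_zeros_empty (K : fieldType) (n : nat) (I : Type)
  (g : I -> {mpoly K[n.+1]}) :=
  forall (L : fieldType) (iota : {rmorphism K -> L}) (v : 'I_n.+1 -> L),
    (forall j, (map_mpoly iota (g j)).@[v] = 0) -> forall i, v i = 0.

Definition in_ideal (K : fieldType) (n r : nat) (th : 'I_r -> {mpoly K[n.+1]})
  (p : {mpoly K[n.+1]}) :=
  exists g : 'I_r -> {mpoly K[n.+1]}, p = \sum_(i < r) g i * th i.

(* homogeneous system of parameters of K[x_0..x_n] (which has Krull dimension n+1):
   n+1 homogeneous elements of positive degree generating an ideal whose radical
   is the irrelevant ideal (equivalently K[x] is finite over K[theta]). *)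
Definition hsop (K : fieldType) (n : nat) (th : 'I_n.+1 -> {mpoly K[n.+1]}) :=
  (forall i, exists e, (0 < e)%N /\ th i \is e.-homog) /\
  (forall j : 'I_n.+1, exists N : nat, in_ideal th ('X_j ^+ N)).

Definition cshift (n : nat) : 'S_n.+1 := perm (@ordS_inj n.+1).

(* Main.v *)
Require Import Defs.
From HB Require Import structures.
From mathcomp Require Import all_boot all_order all_algebra all_fingroup.
From mathcomp Require Import mpoly.
Import GRing.Theory.
Local Open Scope ring_scope.

Section Aux.
Context (K : fieldType) (n : nat).

Lemma coefMX (p : {mpoly K[n]}) (m mm : 'X_{1..n}) :
  (p * 'X_[m])@_mm = if (m <= mm)%MM then p@_(mm - m)%MM else 0.
Proof.
case: ifP => le.
  by rewrite -{1}(submK le) addmC mcoeffMX.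
apply/eqP; rewrite -[_ == 0]negbK -mcoeff_msupp (perm_mem (msuppMX p m)).
apply/negP => /mapP [m' _ E]; move: le; rewrite E.
by move/negbT/negP; apply; apply/mnm_lepP => i; rewrite mnmDE leq_addr.
Qed.

Lemma mdegBle (m1 m2 : 'X_{1..n}) : (m1 <= m2)%MM ->
  (mdeg (m2 - m1) + mdeg m1 = mdeg m2)%N.
Proof. by move=> le; rewrite -mdegD submK. Qed.

Lemma msym_homog d (s : 'S_n) (f : {mpoly K[n]}) :
  f \is d.-homog -> msym s f \is d.-homog.
Proof.
move=> /dhomogP h; apply/dhomogP => m; rewrite mcoeff_msupp mcoeff_sym.
by rewrite -mcoeff_msupp => /h <-; exact: (esym (mdeg_mperm _ _)).
Qed.

Lemma msymXU (s : 'S_n) i : msym s ('X_i : {mpoly K[n]}) = 'X_(s i).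
Proof.
rewrite msymX; congr 'X_[_]; apply/mnmP => j; rewrite !mnmE.
by rewrite -(inj_eq (@perm_inj _ s)) permKV.
Qed.
End Aux.

Section Main.
Context (K : fieldType) (n d : nat) (I : finType) (th : I -> 'S_n.+1).
Context (c : 'I_n.+1 -> I) (hc : forall i, th (c i) ord0 = i).
Local Notation N := (n.+1 * d)%N.
Local Notation MN := (Mon n N).
Local Notation M := #|{: Mon n d}|.

Definition mnmOf e (x : Mon n e) : 'X_{1..n.+1} := bmnm (val x).
Arguments mnmOf {e}.

Lemma mdeg_mnmOf e (x : Mon n e) : mdeg (mnmOf x) = e.
Proof. by case: x => [b /= /eqP ->]. Qed.

Arguments mdeg_mnmOf {e}.

Lemma mnmOf_inj e : injective (@mnmOf e).
Proof. by move=> x y /val_inj /val_inj. Qed.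

Lemma exists_Mon e (mm : 'X_{1..n.+1}) : mdeg mm = e -> exists x : Mon n e, mnmOf x = mm.
Proof.
move=> h; have hb : (mdeg mm < e.+1)%N by rewrite h.
pose b : 'X_{1..n.+1 < e.+1} := BMultinom hb.
have hm : mdeg (bmnm b) == e by rewrite /= h.
by exists (exist _ b hm).
Qed.

Arguments exists_Mon {e}.
Context (im : MN -> 'I_n.+1) (him : forall x, (d <= mnmOf x (im x))%N).

Definition sg x := th (c (im x)).
Definition mp x : 'X_{1..n.+1} := (mnmOf x - U_(im x) *+ d)%MM.
Definition rowp (f : {mpoly K[n.+1]}) x := msym (sg x) f * 'X_[mp x].

Lemma mp_add x : (mp x + U_(im x) *+ d = mnmOf x)%MM.
Proof.
apply: submK; apply/mnm_lepP => i; rewrite mulmnE mnm1E.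
by case: eqP => [<-|_]; rewrite ?mul1n ?mul0n.
Qed.

Lemma mdeg_mp x : (mdeg (mp x) + d = N)%N.
Proof. by rewrite -(mdeg_mnmOf x) -(mp_add x) mdegD mdegMn mdeg1 mul1n. Qed.

Definition Amx (R : ringType) (cv : 'I_M -> R) : 'M[R]_#|{: MN}| :=
  \matrix_(a, b)
    if (mp (enum_val a) <= mnmOf (enum_val b))%MM then
      match [pick j : 'I_M | bmnm (val (enum_val j)) ==
         [multinom (mnmOf (enum_val b) - mp (enum_val a))%MM (sg (enum_val a) i) | i < n.+1]]
      with Some j => cv j | None => 0 end
    else 0.

Arguments Amx {R}.

Lemma AmxE (f : {mpoly K[n.+1]}) a b :
  Amx (coeffs f) a b = (rowp f (enum_val a))@_(mnmOf (enum_val b)).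
Proof.
rewrite mxE /rowp coefMX; case: ifP => le //.
rewrite mcoeff_sym; case: pickP => [j /eqP <-|none] //.
have hdeg : mdeg [multinom (mnmOf (enum_val b) - mp (enum_val a))%MM
     (sg (enum_val a) i) | i < n.+1] = d.
  rewrite mdeg_mperm; apply/eqP; rewrite -(eqn_add2r (mdeg (mp (enum_val a)))).
  by rewrite mdegBle // mdeg_mnmOf addnC mdeg_mp.
have [y hy] := exists_Mon _ hdeg.
by move: (none (enum_rank y)); rewrite enum_rankK /mnmOf in hy *; rewrite hy eqxx.
Qed.

Definition Pol : {mpoly K[M]} := \det (Amx (fun j => 'X_j)).

Lemma PolE cv : Pol.@[cv] = \det (Amx cv).
Proof.
rewrite /Pol -det_map_mx; congr (\det _); apply/matrixP => a b; rewrite !mxE.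
case: ifP => _; last exact: meval0.
by case: pickP => [j _|_]; [exact: mevalXU | exact: meval0].
Qed.

Lemma Amx_X0 : Amx (coeffs ('X_ord0 ^+ d : {mpoly K[n.+1]})) = 1%:M.
Proof.
apply/matrixP => a b; rewrite AmxE mxE /rowp mpolyXn msymX -mpolyXD.
set mm1 := (X in 'X_[X]).
have -> : mm1 = mnmOf (enum_val a).
  rewrite -(mp_add (enum_val a)) addmC /mm1; apply/mnmP => i.
  rewrite !mnmE !mulmnE !mnmE -(inj_eq (@perm_inj _ (sg (enum_val a)))).
  by rewrite permKV /sg hc eq_sym.
by rewrite mcoeffX (inj_eq (@mnmOf_inj _)) (inj_eq enum_val_inj).
Qed.

Lemma Pol_neq0 : Pol != 0.
Proof.
apply/negP => /eqP h; have := PolE (coeffs ('X_ord0 ^+ d : {mpoly K[n.+1]})).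
by rewrite h meval0 Amx_X0 det1 => /eqP; rewrite eq_sym oner_eq0.
Qed.

Lemma key (f : {mpoly K[n.+1]}) : f \is d.-homog -> Pol.@[coeffs f] != 0 ->
  forall j : 'I_n.+1, exists g : I -> {mpoly K[n.+1]},
    'X_j ^+ N = \sum_k g k * msym (th k) f.
Proof.
move=> hf hP j; set A := Amx (coeffs f).
have uA : A \in unitmx by rewrite unitmxE unitfE -PolE.
have [y hy] : exists y : MN, mnmOf y = (U_(j) *+ N)%MM.
  by apply: exists_Mon; rewrite mdegMn mdeg1 mul1n.
pose u := delta_mx (0 : 'I_1) (enum_rank y) *m invmx A.
have uA1 : u *m A = delta_mx (0 : 'I_1) (enum_rank y) by rewrite mulmxKV.
exists (fun k => \sum_(a | c (im (enum_val a)) == k) u 0 a *: 'X_[mp (enum_val a)]).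
transitivity (\sum_a u 0 a *: rowp f (enum_val a)); last first.
  rewrite (partition_big (fun a => c (im (enum_val a))) xpredT) //=.
  apply: eq_bigr => k _; rewrite mulr_suml; apply: eq_bigr => a /eqP <-.
  by rewrite -scalerAl /rowp mulrC.
apply/mpolyP => mm; rewrite mpolyXn mcoeffX raddf_sum /=.
under eq_bigr do rewrite mcoeffZ.
have [hN|hN] := eqVneq (mdeg mm) N.
  have [z <-] := exists_Mon _ hN.
  under eq_bigr do rewrite -[z in mnmOf z](enum_rankK z) -AmxE.
  have := congr1 (fun B : 'rV[K]_#|{: MN}| => B 0 (enum_rank z)) uA1; rewrite !mxE -/A => ->.
  by rewrite -hy (inj_eq (@mnmOf_inj _)) eqxx /= (inj_eq enum_rank_inj) eq_sym.
have -> : (U_(j) *+ N == mm)%MM = false.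
  by apply/negbTE; apply: contra hN => /eqP <-; rewrite mdegMn mdeg1 mul1n.
rewrite big1 // => a _; rewrite /rowp coefMX; case: ifP => le; last by rewrite mulr0.
rewrite mcoeff_sym (dhomog_nemf_coeff hf) ?mulr0 //.
change (mdeg [multinom (mm - mp (enum_val a))%MM (sg (enum_val a) i) | i < n.+1] != d); rewrite mdeg_mperm; apply: contra hN => /eqP hd'.
by rewrite -(mdegBle _ _ _ le) hd' addnC mdeg_mp.
Qed.
End Main.
Arguments mnmOf {n e}.
Arguments mdeg_mnmOf {n e}.

Lemma exists_im (n d : nat) : (0 < d)%N -> forall x : Mon n (n.+1 * d),
  exists i, (d <= mnmOf x i)%N.
Proof.
move=> hd x; case: (pickP (fun i => d <= mnmOf x i)%N) => [i hi|none]; first by exists i.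
exfalso; have := mdeg_mnmOf x; rewrite mdegE => E.
have : (\sum_i mnmOf x i <= \sum_(i : 'I_n.+1) d.-1)%N.
  apply: leq_sum => i _; have := none i; rewrite /= => /negbT.
  by rewrite -ltnNge => h; rewrite -ltnS (prednK hd).
rewrite E sum_nat_const card_ord leqNgt => /negP; apply.
by rewrite ltn_pmul2l // ltn_predL.
Qed.

Lemma cshift_cover n (k : 'I_n.+1) : ((cshift n ^+ k)%g) ord0 = k.
Proof.
have H : forall m, val (iter m (cshift n) ord0) = (m %% n.+1)%N.
  elim => [|m IH] /=; first by rewrite mod0n.
  by rewrite /cshift permE /= IH -addn1 modnDml addn1.
by rewrite permX; apply: val_inj; rewrite H modn_small.
Qed.

Lemma to_zeros (K : fieldType) (n N : nat) (I : Type) (th : I -> {mpoly K[n.+1]})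
  (r : seq I) :
  (0 < N)%N ->
  (forall j : 'I_n.+1, exists g : I -> {mpoly K[n.+1]}, 'X_j ^+ N = \sum_(k <- r) g k * th k) ->
  proj_common_zeros_empty th.
Proof.
move=> hN hid L iota v hz i; have [g hg] := hid i.
have := congr1 (fun p => (map_mpoly iota p).@[v]) hg => /=.
rewrite rmorphXn /= map_mpolyX rmorphXn /= mevalXU (rmorph_sum (map_mpoly iota)) (rmorph_sum (meval v)) big1.
  by move/eqP; rewrite expf_eq0 hN => /eqP.
by move=> k _; rewrite rmorphM /= mevalM hz mulr0.
Qed.

Theorem corollary1p4 (K : fieldType) (n d : nat) :
  infinite_type K -> (1 <= n)%N -> (1 <= d)%N ->
  (forall G : {group 'S_n.+1},
     [transitive G, on [set: 'I_n.+1] | 'P] ->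
     exists P : {mpoly K[#|{: Mon n d}|]}, P != 0 /\
       forall f : {mpoly K[n.+1]},
         f \is d.-homog -> f != 0 -> P.@[coeffs f] != 0 ->
         proj_common_zeros_empty (fun s : {s : 'S_n.+1 | s \in G} => pact (val s) f))
  /\
  (exists P : {mpoly K[#|{: Mon n d}|]}, P != 0 /\
     forall f : {mpoly K[n.+1]},
       f \is d.-homog -> f != 0 -> P.@[coeffs f] != 0 ->
       hsop (fun k : 'I_n.+1 => pact (cshift n ^+ k) f)).
Proof.
move=> _ _ hd.
have [im him] := fin_all_exists (@exists_im n d hd).
have hNpos : (0 < n.+1 * d)%N by rewrite muln_gt0.
split.
  move=> G tG.
  have cov : forall i : 'I_n.+1, exists s : {s : 'S_n.+1 | s \in G}, val s ord0 = i.
    move=> i; have : i \in orbit 'P G ord0 by rewrite (atransP tG) ?inE.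
    case/orbitP => s sG <-; by exists (exist _ s sG).
  have [c hc] := fin_all_exists cov.
  exists (Pol K n d _ val c im); split; first exact: Pol_neq0.
  move=> f hf _ hP; apply: (to_zeros _ _ _ _ _ (index_enum _) hNpos).
  move=> j; have [g hg] := key _ _ _ _ _ _ _ him f hf hP j. by exists g.
exists (Pol K n d _ (fun k : 'I_n.+1 => (cshift n ^+ k)%g) id im); split.
  by apply: Pol_neq0 => //; exact: cshift_cover.
move=> f hf _ hP; split.
  by move=> i; exists d; split => //; exact: msym_homog.
move=> j; exists (n.+1 * d)%N.
have [g hg] := key _ _ _ _ _ _ _ him f hf hP j.
by exists g.
Qed.
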